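(* Let $\mathcal H$ be the Hessian of an admissible Hamiltonian. Then, wherever $I-\varepsilon^2(\mathcal HJ(x))^2$ is invertible, there are unique functions $r_0(x,\varepsilon),\dots,r_{n-1}(x,\varepsilon)$ (rational in $x$ and $\varepsilon$) with $$\big(I-\varepsilon^2(\mathcal HJ(x))^2\big)^{-1}=\sum_{i=0}^{n-1}r_i(x,\varepsilon)A^i,$$ and they satisfy $\nabla_x r_{i-1}(x,\varepsilon)=A\,\nabla_x r_i(x,\varepsilon)$ for $i=1,\dots,n-1$.
   Context: Fix an integer $n\ge 2$. Points of $\mathbb R^{2n}$ are $x=(x_1,\dots,x_{2n})^{T}$; write $u=(x_1,\dots,x_n)^T$. Let $X(u)$ be the $n\times n$ matrix with entries $X(u)_{ij}=x_{k}$ where $k\in\{1,\dots,n\}$, $k\equiv i+j-1 \pmod n$, and let $J(x)=\begin{pmatrix}0&X(u)\\-X(u)&0\end{pmatrix}$. Let $\mathcal P$ be the $n\times n$ cyclic shift matrix ($\mathcal P_{i,i+1}=1$ for $1\le i\le n-1$, $\mathcal P_{n,1}=1$, all other entries $0$) and $A=\begin{pmatrix}\mathcal P&0\\0&\mathcal P\end{pmatrix}$; the matrices $I,A,\dots,A^{n-1}$ are linearly independent. An admissible Hamiltonian is a homogeneous quadratic form $H(x)=\tfrac12 x^T\mathcal H x$ with a constant symmetric matrix $\mathcal H=\nabla^2H$ satisfying $A\mathcal H=\mathcal H A^T$. *)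

(* Defs.v *)
From HB Require Import structures.
From Stdlib Require Import Reals ClassicalEpsilon FunctionalExtensionality.
From mathcomp Require Import all_boot all_order all_algebra.
Set Implicit Arguments. Unset Strict Implicit. Unset Printing Implicit Defensive.
Import GRing.Theory.

Definition Req_bool (x y : R) : bool := if Req_EM_T x y then true else false.

Lemma Req_boolP : Equality.axiom Req_bool.
Proof. by move=> x y; rewrite /Req_bool; case: Req_EM_T => h; constructor. Qed.

HB.instance Definition _ := hasDecEq.Build R Req_boolP.

Definition R_find (P : pred R) (_ : nat) : option R :=
  match excluded_middle_informative (exists x, P x) with
  | left h => Some (proj1_sig (constructive_indefinite_description _ h))
  | right _ => None
  end.

Lemma R_find_correct P n x : R_find P n = Some x -> P x.
Proof.
rewrite /R_find; case: excluded_middle_informative => // h [<-].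
exact: proj2_sig (constructive_indefinite_description _ h).
Qed.

Lemma R_find_complete (P : pred R) : (exists x, P x) -> exists n, R_find P n.
Proof. by move=> h; exists 0%N; rewrite /R_find; case: excluded_middle_informative. Qed.

Lemma R_find_ext (P Q : pred R) : P =1 Q -> R_find P =1 R_find Q.
Proof. by move=> /functional_extensionality ->. Qed.

HB.instance Definition _ :=
  hasChoice.Build R R_find_correct R_find_complete R_find_ext.

Lemma R_addA : associative Rplus. Proof. by move=> *; rewrite Rplus_assoc. Qed.
Lemma R_addC : commutative Rplus. Proof. exact: Rplus_comm. Qed.
Lemma R_add0 : left_id (IZR Z0) Rplus. Proof. exact: Rplus_0_l. Qed.
Lemma R_addN : left_inverse (IZR Z0) Ropp Rplus. Proof. exact: Rplus_opp_l. Qed.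

HB.instance Definition _ := GRing.isZmodule.Build R R_addA R_addC R_add0 R_addN.

Lemma R_mulA : associative Rmult. Proof. by move=> *; rewrite Rmult_assoc. Qed.
Lemma R_mulC : commutative Rmult. Proof. exact: Rmult_comm. Qed.
Lemma R_mul1 : left_id (IZR (Zpos xH)) Rmult. Proof. exact: Rmult_1_l. Qed.
Lemma R_mulDl : left_distributive Rmult Rplus. Proof. exact: Rmult_plus_distr_r. Qed.
Lemma R_one_neq0 : ((IZR (Zpos xH)) : R) != (IZR Z0) :> R.
Proof. by apply/eqP; exact: R1_neq_R0. Qed.

HB.instance Definition _ :=
  GRing.Zmodule_isComNzRing.Build R R_mulA R_mulC R_mul1 R_mulDl R_one_neq0.

Lemma R_mulVf (x : R) : x != IZR Z0 -> Rmult (Rinv x) x = (IZR (Zpos xH)).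
Proof. by move=> /eqP h; exact: Rinv_l. Qed.
Lemma R_inv0 : Rinv (IZR Z0) = (IZR Z0). Proof. exact: Rinv_0. Qed.

HB.instance Definition _ := GRing.ComNzRing_isField.Build R R_mulVf R_inv0.

Local Open Scope ring_scope.

(* Points of R^{2n} are column vectors x : 'cV[R]_(n + n); the first block
   is u = (x_1,...,x_n). Indices are 0-based: X(u)_{ij} = x_k with
   k = (i + j) mod n, which is the paper's k ≡ i + j - 1 (mod n) in 1-based
   indexing. *)
Lemma ord_add_mod_lt n (i j : 'I_n) : ((i + j) %% n < n)%N.
Proof. by apply: ltn_pmod; apply: leq_ltn_trans (ltn_ord i). Qed.

Definition Xmat n (x : 'cV[R]_(n + n)) : 'M[R]_n :=
  \matrix_(i < n, j < n) x (lshift n (Ordinal (ord_add_mod_lt i j))) 0.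

Definition Jmat n (x : 'cV[R]_(n + n)) : 'M[R]_(n + n) :=
  block_mx 0 (Xmat x) (- Xmat x) 0.

(* cyclic shift: P_{i,i+1} = 1, P_{n,1} = 1 (1-based), i.e. P i j = 1 iff
   j = (i + 1) mod n (0-based). *)
Definition Pshift n : 'M[R]_n :=
  \matrix_(i < n, j < n) (nat_of_ord j == (i.+1 %% n)%N)%:R.

Definition Amat n : 'M[R]_(n + n) := block_mx (Pshift n) 0 0 (Pshift n).

Definition Mmat n (Hs : 'M[R]_(n + n)) (x : 'cV[R]_(n + n)) (eps : R) :
  'M[R]_(n + n) :=
  1%:M - (eps ^+ 2) *: ((Hs *m Jmat x) *m (Hs *m Jmat x)).

Definition mxpow n (M : 'M[R]_n) (i : nat) : 'M[R]_n := iter i (mulmx M) 1%:M.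

Definition has_gradient m (f : 'cV[R]_m -> R) (x g : 'cV[R]_m) : Prop :=
  forall k : 'I_m,
    derivable_pt_lim (fun t : R => f (x + t *: delta_mx k 0)) (IZR Z0) (g k 0).

(* Main.v *)
Require Import Defs.
From HB Require Import structures.
From Stdlib Require Import Reals FunctionalExtensionality.
From mathcomp Require Import all_boot all_order all_algebra ring.
Import GRing.Theory.
Set Implicit Arguments. Unset Strict Implicit.
Local Open Scope ring_scope.

Section PShift.
Variable m : nat.
Local Notation n := m.+2.
Local Notation P := (Pshift n).

Lemma PE (i j : 'I_n) : P i j = (j == i + 1)%:R.
Proof.
rewrite mxE; congr (_%:R); rewrite -val_eqE /=.
have -> : (1 %% n = 1)%N by rewrite modn_small.
by rewrite addn1.
Qed.

Lemma mulPmx p (B : 'M[R]_(n, p)) i j : (P *m B) i j = B (i + 1) j.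
Proof.
rewrite mxE (bigD1 (i + 1)) //= PE eqxx mul1r big1 ?addr0 // => l /negbTE hl.
by rewrite PE hl mul0r.
Qed.

Lemma mulmxP p (B : 'M[R]_(p, n)) i j : (B *m P) i j = B i (j - 1).
Proof.
rewrite mxE (bigD1 (j - 1)) //= PE subrK eqxx mulr1 big1 ?addr0 // => l hl.
rewrite PE; case: eqP => [e|]; last by rewrite mulr0.
by move: hl; rewrite e addrK eqxx.
Qed.

Lemma mulmxPt p (B : 'M[R]_(p, n)) i j : (B *m P^T) i j = B i (j + 1).
Proof.
rewrite mxE (bigD1 (j + 1)) //= mxE PE eqxx mulr1 big1 ?addr0 // => l /negbTE hl.
by rewrite mxE PE hl mulr0.
Qed.

Lemma mulPtmx p (B : 'M[R]_(n, p)) i j : (P^T *m B) i j = B (i - 1) j.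
Proof.
rewrite mxE (bigD1 (i - 1)) //= mxE PE subrK eqxx mul1r big1 ?addr0 // => l hl.
rewrite mxE PE; case: eqP => [e|]; last by rewrite mul0r.
by move: hl; rewrite e addrK eqxx.
Qed.

Lemma PPt : P *m P^T = 1%:M.
Proof.
apply/matrixP => i j; rewrite mulPmx mxE PE !mxE.
by rewrite (can_eq (addrK 1)).
Qed.

Lemma PtP : P^T *m P = 1%:M.
Proof.
apply/matrixP => i j; rewrite mulPtmx PE !mxE subrK.
by rewrite eq_sym.
Qed.

Definition Ppow k : 'M[R]_n := iter k (mulmx P) 1%:M.

Lemma PpowE k i j : Ppow k i j = (j == i + k%:R)%:R.
Proof.
elim: k i => [|k IH] i /=; first by rewrite mxE addr0 eq_sym.
by rewrite mulPmx IH -addrA -(natrD _ 1 k) add1n.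
Qed.

End PShift.

Section Circ.
Variable m : nat.
Local Notation n := m.+2.
Local Notation P := (Pshift n).

Definition circ (C : 'M[R]_n) := P *m C = C *m P.
Definition hank (S : 'M[R]_n) := P *m S = S *m P^T.

Lemma circ_step C : circ C -> forall i j, C (i + 1) j = C i (j - 1).
Proof. by move=> h i j; rewrite -mulPmx h mulmxP. Qed.

Lemma circE C : circ C -> forall i j, C i j = C 0 (j - i).
Proof.
move=> h i j; rewrite -(natr_Zp i).
elim: (nat_of_ord i) j => [|k IH] j; first by rewrite subr0.
rewrite mulrSr circ_step // IH; congr (C 0 _).
by rewrite opprD addrAC addrA.
Qed.

Lemma circ_poly C : circ C -> C = \sum_(k < n) C 0 k *: Ppow m k.
Proof.
move=> h; apply/matrixP => i j; rewrite summxE (bigD1 (j - i)) // mxE PpowE.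
rewrite natr_Zp (addrC i) subrK eqxx mulr1 big1; first by rewrite -circE //= addr0.
move=> k hk.
rewrite mxE PpowE natr_Zp; case: eqP => [e|]; last by rewrite mulr0.
by move: hk; rewrite e (addrC i) addrK eqxx.
Qed.

Lemma circ_Ppow C k : circ C -> C *m Ppow m k = Ppow m k *m C.
Proof.
move=> h; elim: k => [|k IH] /=; first by rewrite mulmx1 mul1mx.
by rewrite mulmxA -h -!mulmxA IH.
Qed.

Lemma circ_comm C1 C2 : circ C1 -> circ C2 -> C1 *m C2 = C2 *m C1.
Proof.
move=> h1 h2; rewrite (circ_poly h1) mulmx_suml mulmx_sumr.
by apply: eq_bigr => k _; rewrite -scalemxAl -scalemxAr circ_Ppow.
Qed.

Lemma circM C1 C2 : circ C1 -> circ C2 -> circ (C1 *m C2).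
Proof. by move=> h1 h2; rewrite /circ mulmxA h1 -mulmxA h2 mulmxA. Qed.
Lemma circD C1 C2 : circ C1 -> circ C2 -> circ (C1 + C2).
Proof. by move=> h1 h2; rewrite /circ mulmxDl mulmxDr h1 h2. Qed.
Lemma circN C : circ C -> circ (- C).
Proof. by move=> h; rewrite /circ mulmxN mulNmx h. Qed.
Lemma circZ a C : circ C -> circ (a *: C).
Proof. by move=> h; rewrite /circ -scalemxAl -scalemxAr h. Qed.
Lemma circ1 : circ 1%:M.
Proof. by rewrite /circ mulmx1 mul1mx. Qed.
Lemma circ_inv F : circ F -> F \in unitmx -> circ (invmx F).
Proof.
move=> h hu; rewrite /circ.
rewrite -[P *m _](mulKmx hu); congr (_ *m _).
by rewrite mulmxA -h -mulmxA (mulmxV hu) mulmx1.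
Qed.

Lemma hank_step S : hank S -> forall i j, S (i + 1) j = S i (j + 1).
Proof. by move=> h i j; rewrite -mulPmx h mulmxPt. Qed.

Lemma hank_tr S : hank S -> P^T *m S = S *m P.
Proof.
move=> h; apply/matrixP => i j; rewrite mulPtmx mulmxP.
by rewrite -{2}(subrK 1 i) hank_step // subrK.
Qed.

Lemma hank_circ S1 S2 : hank S1 -> hank S2 -> circ (S1 *m S2).
Proof.
by move=> h1 h2; rewrite /circ mulmxA h1 -mulmxA hank_tr // mulmxA.
Qed.

Lemma hank_sym S : hank S -> S^T = S.
Proof.
move=> h.
have E : forall i j, S i j = S 0 (j + i).
  move=> i j; rewrite -(natr_Zp i).
  elim: (nat_of_ord i) j => [|k IH] j; first by rewrite addr0.
  by rewrite mulrSr hank_step // IH addrAC addrA.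
by apply/matrixP => i j; rewrite mxE E (E i) addrC.
Qed.

End Circ.

Section Alg.
Variable m : nat.
Local Notation n := m.+2.
Local Notation P := (Pshift n).
Local Notation A := (Amat n).

Lemma XmatE (x : 'cV[R]_(n + n)) i j : Xmat x i j = x (lshift n (i + j)) 0.
Proof. by rewrite mxE; congr (x _ 0); apply: val_inj. Qed.

Lemma Xhank (x : 'cV[R]_(n + n)) : hank (Xmat x).
Proof. by apply/matrixP => i j; rewrite mulPmx mulmxPt !XmatE addrAC addrA. Qed.

Lemma Xlin (x y : 'cV[R]_(n + n)) t : Xmat (x + t *: y) = Xmat x + t *: Xmat y.
Proof. by apply/matrixP => i j; rewrite !mxE. Qed.

Lemma Jlin (x y : 'cV[R]_(n + n)) t : Jmat (x + t *: y) = Jmat x + t *: Jmat y.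
Proof.
by rewrite /Jmat Xlin scale_block_mx add_block_mx !scaler0 !addr0 scalerN opprD.
Qed.

Lemma AJ (x : 'cV[R]_(n + n)) : A^T *m Jmat x = Jmat x *m A.
Proof.
rewrite /Amat /Jmat tr_block_mx !trmx0 !mulmx_block.
rewrite !mulmx0 !mul0mx !addr0 !add0r mulmxN mulNmx hank_tr //; exact: Xhank.
Qed.

Lemma AK (Hs : 'M[R]_(n + n)) (x : 'cV[R]_(n + n)) : A *m Hs = Hs *m A^T ->
  A *m (Hs *m Jmat x) = (Hs *m Jmat x) *m A.
Proof. by move=> h; rewrite mulmxA h -mulmxA AJ mulmxA. Qed.

Lemma HJ2 (a b d : 'M[R]_n) (x : 'cV[R]_(n + n)) : hank a -> hank b -> hank d ->
  let K := block_mx a b b d *m Jmat x in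
  K *m K = block_mx (b *m Xmat x *m (b *m Xmat x) - a *m Xmat x *m (d *m Xmat x)) 0 0
                    (b *m Xmat x *m (b *m Xmat x) - a *m Xmat x *m (d *m Xmat x)).
Proof.
move=> ha hb hd K; rewrite /K /Jmat mulmx_block.
rewrite !mulmx0 !addr0 !add0r !mulmxN mulmx_block.
have hX := Xhank x.
have cA : circ (a *m Xmat x) by exact: hank_circ.
have cB : circ (b *m Xmat x) by exact: hank_circ.
have cD : circ (d *m Xmat x) by exact: hank_circ.
rewrite !mulNmx !mulmxN !opprK.
rewrite (circ_comm cA cB) addNr (circ_comm cD cB) subrr (circ_comm cD cA) addrC.
by [].
Qed.

Lemma Apow k : mxpow A k = block_mx (Ppow m k) 0 0 (Ppow m k).
Proof.
elim: k => [|k IH] /=; first by rewrite -scalar_mx_block.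
rewrite /mxpow /= -/(mxpow A k) IH /Amat mulmx_block.
by rewrite !mulmx0 !mul0mx !addr0 !add0r.
Qed.

Lemma sum_diag (f : 'I_n -> 'M[R]_n) :
  \sum_k block_mx (f k) 0 0 (f k) = block_mx (\sum_k f k) 0 0 (\sum_k f k).
Proof.
have hm : {morph (fun C : 'M[R]_n => block_mx C 0 0 C) : B C / B + C >-> B + C}.
  by move=> B C; rewrite add_block_mx !addr0.
by rewrite (big_morph (fun C : 'M[R]_n => block_mx C 0 0 C) hm (block_mx0 _ _ _ _ _)).
Qed.

Lemma coefE (c : 'I_n -> R) i :
  (\sum_(k < n) c k *: mxpow A k) (lshift n 0) (lshift n i) = c i.
Proof.
rewrite summxE (bigD1 i) //= mxE Apow block_mxEul PpowE natr_Zp add0r eqxx mulr1.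
rewrite big1 ?addr0 // => k hk; rewrite mxE Apow block_mxEul PpowE natr_Zp add0r.
by rewrite eq_sym (negbTE hk) mulr0.
Qed.

End Alg.

Section An.
Local Open Scope R_scope.

Lemma deriv_quot (f g : R -> R) (d : R) : 0 < d ->
  (forall h, h <> 0 -> Rabs h < d -> f h - f 0 = h * g h) ->
  continuity_pt g 0 -> derivable_pt_lim f 0 (g 0).
Proof.
intros Hd Hq Hg eps He. destruct (Hg eps He) as [a [Ha Hc]].
exists (mkposreal (Rmin d a) (Rmin_pos _ _ Hd Ha)). intros h Hh Hb. simpl in Hb.
rewrite Rplus_0_l Hq; [| exact Hh | apply Rlt_le_trans with (1:=Hb); apply Rmin_l].
unfold Rdiv. rewrite (Rmult_comm h) Rmult_assoc (Rinv_r _ Hh) Rmult_1_r.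
apply (Hc h). split. split. exact I. auto.
simpl. unfold R_dist. rewrite Rminus_0_r.
apply Rlt_le_trans with (1:=Hb); apply Rmin_r.
Qed.

Lemma cont_nz (f : R -> R) : continuity_pt f 0 -> f 0 <> 0 ->
  exists d, 0 < d /\ forall h, Rabs h < d -> f h <> 0.
Proof.
intros Hc Hf. destruct (Hc (Rabs (f 0)) (Rabs_pos_lt _ Hf)) as [a [Ha Hc']].
exists a. split. exact Ha. intros h Hh Hz.
destruct (Req_dec h 0) as [->|Hn]. contradiction.
assert (H := Hc' h). simpl in H. unfold R_dist in H. rewrite Hz Rminus_0_r Rminus_0_l Rabs_Ropp in H.
apply (Rlt_irrefl (Rabs (f 0))). apply H. split. split. exact I. auto. exact Hh.
Qed.

End An.

Definition cont (f : R -> R) := continuity_pt f 0.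

Lemma cont_ext f g : (forall t, f t = g t) -> cont f -> cont g.
Proof. by move=> h; have -> : f = g by apply: functional_extensionality. Qed.

Lemma cont_const c : cont (fun _ => c).
Proof. by apply: continuity_pt_const. Qed.

Lemma cont_id : cont (fun t => t).
Proof. exact: (derivable_continuous_pt _ _ (derivable_pt_id 0)). Qed.

Lemma cont_add f g : cont f -> cont g -> cont (fun t => f t + g t).
Proof. move=> hf hg; exact: (continuity_pt_plus _ _ _ hf hg). Qed.

Lemma cont_mul f g : cont f -> cont g -> cont (fun t => f t * g t).
Proof. move=> hf hg; exact: (continuity_pt_mult _ _ _ hf hg). Qed.

Lemma cont_opp f : cont f -> cont (fun t => - f t).
Proof. move=> hf; exact: (continuity_pt_opp _ _ hf). Qed.

Lemma cont_inv f : cont f -> f 0 <> 0 -> cont (fun t => (f t)^-1).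
Proof. move=> hf h0; exact: (continuity_pt_inv _ _ hf h0). Qed.

Lemma cont_sum (I : Type) (r : seq I) (P : pred I) (F : I -> R -> R) :
  (forall i, cont (F i)) -> cont (fun t => \sum_(i <- r | P i) F i t).
Proof.
move=> hF; elim: r => [|a r IH].
  by apply: (cont_ext (f := fun _ => 0)) => [t|]; [rewrite big_nil | exact: cont_const].
case: (boolP (P a)) => hP.
  apply: (cont_ext (f := fun t => F a t + \sum_(i <- r | P i) F i t)) => [t|].
    by rewrite big_cons hP.
  exact: cont_add.
apply: (cont_ext (f := fun t => \sum_(i <- r | P i) F i t)) => [t|//].
by rewrite big_cons (negbTE hP).
Qed.

Lemma cont_prod (I : Type) (r : seq I) (P : pred I) (F : I -> R -> R) :
  (forall i, cont (F i)) -> cont (fun t => \prod_(i <- r | P i) F i t).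
Proof.
move=> hF; elim: r => [|a r IH].
  by apply: (cont_ext (f := fun _ => 1)) => [t|]; [rewrite big_nil | exact: cont_const].
case: (boolP (P a)) => hP.
  apply: (cont_ext (f := fun t => F a t * \prod_(i <- r | P i) F i t)) => [t|].
    by rewrite big_cons hP.
  exact: cont_mul.
apply: (cont_ext (f := fun t => \prod_(i <- r | P i) F i t)) => [t|//].
by rewrite big_cons (negbTE hP).
Qed.

Definition mxcont p q (F : R -> 'M[R]_(p, q)) := forall i j, cont (fun t => F t i j).

Lemma mxcont_const p q (M : 'M[R]_(p, q)) : mxcont (fun _ => M).
Proof. by move=> i j; exact: cont_const. Qed.

Lemma mxcont_add p q (F G : R -> 'M[R]_(p, q)) : mxcont F -> mxcont G -> mxcont (fun t => F t + G t).
Proof.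
move=> hF hG i j; apply: (cont_ext (f := fun t => F t i j + G t i j)) => [t|]; first by rewrite mxE.
exact: cont_add.
Qed.

Lemma mxcont_opp p q (F : R -> 'M[R]_(p, q)) : mxcont F -> mxcont (fun t => - F t).
Proof.
move=> hF i j; apply: (cont_ext (f := fun t => - F t i j)) => [t|]; first by rewrite mxE.
exact: cont_opp.
Qed.

Lemma mxcont_scale p q (c : R -> R) (F : R -> 'M[R]_(p, q)) : cont c -> mxcont F ->
  mxcont (fun t => c t *: F t).
Proof.
move=> hc hF i j; apply: (cont_ext (f := fun t => c t * F t i j)) => [t|]; first by rewrite mxE.
exact: cont_mul.
Qed.

Lemma mxcont_mul p q s (F : R -> 'M[R]_(p, q)) (G : R -> 'M[R]_(q, s)) :
  mxcont F -> mxcont G -> mxcont (fun t => F t *m G t).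
Proof.
move=> hF hG i j; apply: (cont_ext (f := fun t => \sum_l F t i l * G t l j)) => [t|]; first by rewrite mxE.
by apply: cont_sum => l; exact: cont_mul.
Qed.

Lemma cont_det p (F : R -> 'M[R]_p) : mxcont F -> cont (fun t => \det (F t)).
Proof.
move=> hF; rewrite /determinant; apply: cont_sum => s.
apply: cont_mul; first exact: cont_const.
by apply: cont_prod => i; exact: hF.
Qed.

Lemma mxcont_adj p (F : R -> 'M[R]_p) : mxcont F -> mxcont (fun t => \adj (F t)).
Proof.
move=> hF i j; apply: (cont_ext (f := fun t => cofactor (F t) j i)) => [t|]; first by rewrite mxE.
rewrite /cofactor; apply: cont_mul; first exact: cont_const.
apply: cont_det => a b.
apply: (cont_ext (f := fun t => F t (lift j a) (lift i b))) => [t|]; first by rewrite !mxE.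
exact: hF.
Qed.

Lemma invmx_unit p (M : 'M[R]_p) : M \in unitmx -> invmx M = (\det M)^-1 *: \adj M.
Proof. by rewrite /invmx => ->. Qed.

Lemma deriv_inv p (M0 : 'M[R]_p) (N : R -> 'M[R]_p) : mxcont N -> M0 \in unitmx ->
  forall i j, derivable_pt_lim (fun t => invmx (M0 + t *: N t) i j) 0
                ((- (invmx M0 *m N 0 *m invmx M0)) i j).
Proof.
move=> hN hu i j.
pose Mt := fun t => M0 + t *: N t.
have hM : mxcont Mt := mxcont_add (mxcont_const M0) (mxcont_scale cont_id hN).
have M0E : Mt 0 = M0 by rewrite /Mt scale0r addr0.
have hd := cont_det hM.
have hd0 : \det (Mt 0) <> 0 by rewrite M0E; apply/eqP; rewrite -unitfE -unitmxE.
have [d [dpos hdd]] := cont_nz hd hd0.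
pose E' := fun t => (\det (Mt t))^-1 *: \adj (Mt t).
have hE : mxcont E' := mxcont_scale (cont_inv hd hd0) (mxcont_adj hM).
have E0 : E' 0 = invmx M0 by rewrite /E' M0E invmx_unit.
pose g := fun t => (- (E' t *m N t *m invmx M0)) i j.
have hg : cont g.
  exact: (mxcont_opp (mxcont_mul (mxcont_mul hE hN) (mxcont_const _))).
have -> : (- (invmx M0 *m N 0 *m invmx M0)) i j = g 0 by rewrite /g E0.
apply: (deriv_quot dpos _ hg) => h hh hdh.
change (invmx (Mt h) i j - invmx (Mt 0) i j = h * g h).
have hu' : Mt h \in unitmx by rewrite unitmxE unitfE; apply/eqP; exact: hdd.
have Eh : invmx (Mt h) = E' h by rewrite invmx_unit.
rewrite M0E /g -Eh.
set Ehh := invmx (Mt h); set E00 := invmx M0.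
have key : Ehh - E00 = - (h *: (Ehh *m N h *m E00)).
  have R1 : Ehh = Ehh *m M0 *m E00 by rewrite -mulmxA mulmxV // mulmx1.
  have R2 : E00 = Ehh *m Mt h *m E00 by rewrite mulVmx // mul1mx.
  rewrite {1}R1 {2}R2 -mulmxBl -mulmxBr /Mt opprD addrA subrr add0r.
  by rewrite mulmxN mulNmx -scalemxAr -scalemxAl.
set W := Ehh *m N h *m E00.
move: (congr1 (fun M : 'M[R]_p => M i j) key) => /=; rewrite !mxE => ->.
by rewrite mulrN.
Qed.

Lemma split_ord p q (k : 'I_(p + q)) : {k' | k = lshift q k'} + {k' | k = rshift p k'}.
Proof. by case: (splitP k) => [j hj|j hj]; [left; exists j | right; exists j]; apply: val_inj. Qed.

Lemma scal_eq (V : lmodType R) (e t : R) (u v w z o : V) :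
  o - e *: (u + t *: v + t *: w + t *: (t *: z)) =
  (o - e *: u) + t *: - (e *: (v + w + t *: z)).
Proof.
rewrite !scalerDr !scalerN !scalerA !opprD !addrA !scalerDr !scalerA !opprD !addrA.
by rewrite !(mulrC t e) (mulrC t (e * t)).
Qed.

Section Main.
Variable m : nat.
Local Notation n := m.+2.
Local Notation P := (Pshift n).
Local Notation A := (Amat n).

Lemma mulmxA_l (B : 'M[R]_(n + n)) r i : (B *m A) r (lshift n i) = B r (lshift n (i - 1)).
Proof.
rewrite mxE big_split_ord /=.
rewrite [X in _ + X]big1 ?addr0; last by move=> l _; rewrite block_mxEdl mxE mulr0.
rewrite (bigD1 (i - 1)) //= block_mxEul PE subrK eqxx mulr1 big1 ?addr0 // => l hl.
rewrite block_mxEul PE; case: eqP => [e|]; last by rewrite mulr0.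
by move: hl; rewrite e addrK eqxx.
Qed.

Lemma Xdelta_r k : Xmat (delta_mx (rshift n k) 0 : 'cV[R]_(n + n)) = 0.
Proof. by apply/matrixP => a b; rewrite XmatE !mxE eq_lrshift. Qed.

Lemma Xdelta_l k : Xmat (delta_mx (lshift n (k + 1)) 0 : 'cV[R]_(n + n)) =
  Xmat (delta_mx (lshift n k) 0 : 'cV[R]_(n + n)) *m P.
Proof.
apply/matrixP => a b; rewrite mulmxP !XmatE !mxE !eq_lshift.
by rewrite addrA subr_eq.
Qed.

Lemma Jdelta_l k : Jmat (delta_mx (lshift n (k + 1)) 0 : 'cV[R]_(n + n)) =
  Jmat (delta_mx (lshift n k) 0 : 'cV[R]_(n + n)) *m A.
Proof.
rewrite /Jmat /Amat mulmx_block Xdelta_l.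
by rewrite !mulmx0 !mul0mx !addr0 !add0r mulNmx.
Qed.

Lemma Jdelta_r k : Jmat (delta_mx (rshift n k) 0 : 'cV[R]_(n + n)) = 0.
Proof. by rewrite /Jmat Xdelta_r oppr0 block_mx0. Qed.

Lemma mulAmx_l (v : 'cV[R]_(n + n)) k : (A *m v) (lshift n k) 0 = v (lshift n (k + 1)) 0.
Proof.
rewrite mxE big_split_ord /=.
rewrite [X in _ + X]big1 ?addr0; last by move=> l _; rewrite block_mxEur mxE mul0r.
rewrite (bigD1 (k + 1)) //= block_mxEul PE eqxx mul1r big1 ?addr0 // => l hl.
by rewrite block_mxEul PE (negbTE hl) mul0r.
Qed.

Lemma mulAmx_r (v : 'cV[R]_(n + n)) k : (A *m v) (rshift n k) 0 = v (rshift n (k + 1)) 0.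
Proof.
rewrite mxE big_split_ord /=.
rewrite [X in X + _]big1 ?add0r; last by move=> l _; rewrite block_mxEdl mxE mul0r.
rewrite (bigD1 (k + 1)) //= block_mxEdr PE eqxx mul1r big1 ?addr0 // => l hl.
by rewrite block_mxEdr PE (negbTE hl) mul0r.
Qed.

End Main.

Theorem mainTheorem20 (n : nat) (hn : (2 <= n)%N) (Hs : 'M[R]_(n + n))
  (Hsym : Hs^T = Hs) (Hadm : Amat n *m Hs = Hs *m (Amat n)^T) :
  exists r : 'I_n -> 'cV[R]_(n + n) -> R -> R,
    forall (x : 'cV[R]_(n + n)) (eps : R),
      Mmat Hs x eps \in unitmx ->
      [/\ invmx (Mmat Hs x eps) = \sum_(i < n) r i x eps *: mxpow (Amat n) i,
          (forall c : 'I_n -> R,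
             invmx (Mmat Hs x eps) = \sum_(i < n) c i *: mxpow (Amat n) i ->
             forall i, c i = r i x eps)
        & forall (i j : 'I_n), nat_of_ord i = j.+1 ->
            exists gi gj : 'cV[R]_(n + n),
              [/\ has_gradient (fun y => r i y eps) x gi,
                  has_gradient (fun y => r j y eps) x gj
                & gj = Amat n *m gi]].
Proof.
case: n hn Hs Hsym Hadm => [|[|m]] // _ Hs Hsym Hadm.
pose a := ulsubmx Hs; pose b := ursubmx Hs; pose c := dlsubmx Hs; pose d := drsubmx Hs.
have HsE : Hs = block_mx a b c d by rewrite submxK.
have [_ hcb _ _] : [/\ a^T = a, c^T = b, b^T = c & d^T = d].
  by apply: eq_block_mx; rewrite -tr_block_mx -HsE.
have [ha hb hc hd] : [/\ hank a, hank b, hank c & hank d].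
  move: Hadm; rewrite {1 2}HsE /Amat tr_block_mx !trmx0 !mulmx_block.
  rewrite !mulmx0 !mul0mx !addr0 !add0r => /eq_block_mx [h1 h2 h3 h4].
  by split; rewrite /hank.
have cb : c = b by rewrite -hcb hank_sym.
rewrite cb in HsE.
exists (fun i x eps => invmx (Mmat Hs x eps) (lshift _ 0) (lshift _ i)).
move=> x eps hu.
pose X := Xmat x.
pose D := b *m X *m (b *m X) - a *m X *m (d *m X).
pose F := 1%:M - eps ^+ 2 *: D.
have ME : Mmat Hs x eps = block_mx F 0 0 F.
  rewrite /Mmat {1 2}HsE (HJ2 x ha hb hd) scalar_mx_block scale_block_mx opp_block_mx.
  by rewrite add_block_mx !scaler0 !oppr0 !addr0.
have hF : F \in unitmx by move: hu; rewrite ME block_diag_mx_unit => /andP [].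
have invE : invmx (Mmat Hs x eps) = block_mx (invmx F) 0 0 (invmx F).
  by rewrite ME invmx_block_diag // -ME.
have cF : circ F.
  apply: circD; first exact: circ1.
  apply: circN; apply: circZ; apply: circD; last apply: circN; apply: circM; exact: hank_circ (Xhank x).
have hG := circ_inv cF hF.
have rE : forall k, invmx (Mmat Hs x eps) (lshift _ 0) (lshift _ k) = invmx F 0 k.
  by move=> k; rewrite invE block_mxEul.
split.
- under eq_bigr => k _ do rewrite rE Apow scale_block_mx !scaler0.
  by rewrite sum_diag -(circ_poly hG) invE.
- by move=> cc h i; rewrite h coefE.
move=> i j hij.
pose E0 := invmx (Mmat Hs x eps).
pose K0 := Hs *m Jmat x.
pose K1 := fun k : 'I_(m.+2 + m.+2) => Hs *m Jmat (delta_mx k 0 : 'cV[R]_(m.+2 + m.+2)).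
pose N := fun k t => - (eps ^+ 2 *: (K0 *m K1 k + K1 k *m K0 + t *: (K1 k *m K1 k))).
have MtE : forall k t, Mmat Hs (x + t *: delta_mx k 0) eps = Mmat Hs x eps + t *: N k t.
  move=> k t; rewrite /Mmat Jlin mulmxDr -scalemxAr.
  rewrite mulmxDl !mulmxDr -!scalemxAl -!scalemxAr !addrA.
  exact: scal_eq.
have hNc : forall k, mxcont (N k).
  move=> k.
  apply: (mxcont_opp (F := fun t => eps ^+ 2 *: (K0 *m K1 k + K1 k *m K0 + t *: (K1 k *m K1 k)))).
  apply: (mxcont_scale (c := fun _ => eps ^+ 2)); first exact: cont_const.
  apply: mxcont_add; first exact: mxcont_const.
  apply: mxcont_scale; [exact: cont_id | exact: mxcont_const].
pose Dm := fun k => - (E0 *m N k 0 *m E0).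
pose g := fun i0 : 'I_m.+2 => \col_(k < m.+2 + m.+2) Dm k (lshift _ 0) (lshift _ i0).
have hgrad : forall i0, has_gradient
    (fun y => invmx (Mmat Hs y eps) (lshift _ 0) (lshift _ i0)) x (g i0).
  move=> i0 k; rewrite mxE.
  have Hf : (fun t => invmx (Mmat Hs x eps + t *: N k t) (lshift _ 0) (lshift _ i0)) =
     (fun t => invmx (Mmat Hs (x + t *: delta_mx k 0) eps) (lshift _ 0) (lshift _ i0)).
    by apply: functional_extensionality => t; rewrite MtE.
  move: (deriv_inv (hNc k) hu (lshift _ 0) (lshift _ i0)); rewrite Hf.
  exact.
exists (g i), (g j); split; [exact: hgrad | exact: hgrad | ].
have Dr : forall k', Dm (rshift _ k') = 0.
  move=> k'; rewrite /Dm /N /K1 Jdelta_r !mulmx0 !mul0mx !scaler0 !addr0 !scaler0.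
  by rewrite oppr0 mulmx0 mul0mx oppr0.
have AE0 : Amat _ *m E0 = E0 *m Amat _.
  rewrite /E0 invE /Amat !mulmx_block !mulmx0 !mul0mx !addr0 !add0r.
  by rewrite hG.
have AK0 : Amat _ *m K0 = K0 *m Amat _ := AK x Hadm.
have Dl : forall k', Dm (lshift _ (k' + 1)) = Dm (lshift _ k') *m Amat _.
  move=> k'; rewrite /Dm /N !scale0r !addr0 /K1 Jdelta_l !(mulmxA Hs).
  set K := Hs *m Jmat _.
  have -> : K0 *m (K *m Amat _) + K *m Amat _ *m K0 = (K0 *m K + K *m K0) *m Amat _.
    by rewrite mulmxDl mulmxA -(mulmxA K) AK0 mulmxA.
  set S := K0 *m K + K *m K0.
  rewrite scalemxAl -(mulNmx (eps ^+ 2 *: S)).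
  by rewrite (mulmxA E0) -(mulmxA _ (Amat _) E0) AE0 !mulmxA mulNmx.
have ij : i = j + 1.
  apply: val_inj => /=; rewrite hij.
  have h1 : (1 %% m.+2 = 1)%N by rewrite modn_small.
  by rewrite h1 addn1 modn_small // -hij ltn_ord.
have gE : forall i0 k, g i0 k 0 = Dm k (lshift _ 0) (lshift _ i0).
  by move=> i0 k; rewrite mxE.
apply/matrixP => k z; rewrite (ord1 z).
case: (split_ord k) => [[k' ->]|[k' ->]].
  by rewrite mulAmx_l !gE Dl mulmxA_l ij addrK.
by rewrite mulAmx_r !gE !Dr !mxE.
Qed.
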